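(* For every integer $m\ge2$ and every graph $G$, $\hom(S_{2,1^0};G)\cdot\hom(S_{2,1^{m-2}};G)^2\ge \hom(S_{2,1^{m-1}};G)^2$.
   Context: All graphs are finite; $\hom(H;G)$ is the number of graph homomorphisms from $H$ to $G$. For $k\ge0$, $S_{2,1^k}$ is the tree with vertex set $\{1,\ldots,k+3\}$ and edge set $\{\{1,j\}:2\le j\le k+2\}\cup\{\{k+2,k+3\}\}$. *)

(* Defs.v *)
From mathcomp Require Import all_boot all_order.
Set Implicit Arguments. Unset Strict Implicit. Unset Printing Implicit Defensive.

Definition simple_graph (V : finType) (e : rel V) : Prop :=
  symmetric e /\ irreflexive e.

Definition hom (VH : finType) (eH : rel VH) (VG : finType) (eG : rel VG) : nat :=
  #|[set f : {ffun VH -> VG} | [forall x, forall y, eH x y ==> eG (f x) (f y)]]|.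

(* S_{2,1^k}: vertices {1,...,k+3} encoded as 'I_(k+3) via j |-> j-1.
   Edges {1,j} (2 <= j <= k+2) become {0,j'} (1 <= j' <= k+1), and the edge
   {k+2,k+3} becomes {k+1,k+2}. *)
Definition S21_edge (k : nat) (a b : nat) : bool :=
  ((a == 0) && (1 <= b <= k.+1)) || ((a == k.+1) && (b == k.+2)).

Definition S21_rel (k : nat) : rel 'I_(k + 3) :=
  fun x y => S21_edge k x y || S21_edge k y x.

Definition homS21 (k : nat) (VG : finType) (eG : rel VG) : nat :=
  @hom _ (@S21_rel k) _ eG.

(* Main.v *)
Require Import Defs.
From mathcomp Require Import all_boot all_order.
From mathcomp Require Import zify.
Set Implicit Arguments. Unset Strict Implicit. Unset Printing Implicit Defensive.

Lemma edge_bump a x y : S21_edge a x y -> S21_edge a.+1 (bump 1 x) (bump 1 y).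
Proof.
rewrite /S21_edge /bump.
case/orP => [/andP[/eqP-> /andP[H1 H2]]|/andP[/eqP-> /eqP->]]; apply/orP.
  left; apply/andP; split=> //; rewrite H1; apply/andP; split; lia.
right; rewrite /=; apply/andP; split; apply/eqP; lia.
Qed.

Definition maxdeg (V : finType) (e : rel V) := \max_(v : V) #|[set u | e v u]|.

Section Step.
Variables (V : finType) (e : rel V) (a : nat).

Lemma bump_lt (j : 'I_(a + 3)) : bump 1 j < a.+1 + 3.
Proof. have := ltn_ord j; rewrite /bump; lia. Qed.

Definition gO (j : 'I_(a + 3)) : 'I_(a.+1 + 3) := Ordinal (bump_lt j).
Definition v0 : 'I_(a.+1 + 3) := @Ordinal (a.+1 + 3) 0 ltac:(lia).
Definition v1 : 'I_(a.+1 + 3) := @Ordinal (a.+1 + 3) 1 ltac:(lia).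
Definition w0 : 'I_(a + 3) := @Ordinal (a + 3) 0 ltac:(lia).

Definition phi (f : {ffun 'I_(a.+1 + 3) -> V}) : {ffun 'I_(a + 3) -> V} * V :=
  ([ffun j => f (gO j)], f v1).

Lemma phi_inj : injective phi.
Proof.
move=> f f' [] /ffunP H H1; apply/ffunP => i.
case: (eqVneq (val i) 1) => Hi.
  by have -> : i = v1 by apply: val_inj.
have Hj : unbump 1 i < a + 3.
  have := ltn_ord i; rewrite /unbump; case: ltnP => /= ?; lia.
have := H (Ordinal Hj); rewrite !ffunE.
have -> // : gO (Ordinal Hj) = i.
apply: val_inj => /=; rewrite /bump /unbump /=; move: Hi.
case: (ltnP 1 i) => /= H2 Hi; rewrite ?subn1 ?subn0.
  by move: H2; case: (nat_of_ord i) => [|[|n]].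
by move: H2 Hi; case: (nat_of_ord i) => [|[|n]].
Qed.

Lemma stepS : homS21 a.+1 e <= maxdeg e * homS21 a e.
Proof.
rewrite /homS21 /hom.
set A := [set f : {ffun _ -> V} | _].
set B := [set f : {ffun _ -> V} | _].
set T := [set p : {ffun 'I_(a + 3) -> V} * V | (p.1 \in B) && e (p.1 w0) p.2].
have HT : #|A| <= #|T|.
  rewrite -(card_imset _ phi_inj); apply: subset_leq_card.
  apply/subsetP => _ /imsetP[f fA ->].
  move: fA; rewrite inE => /forallP Hf.
  rewrite inE /=; apply/andP; split.
    rewrite inE; apply/forallP => x; apply/forallP => y; apply/implyP => Hxy.
    rewrite !ffunE; have := Hf (gO x) => /forallP /(_ (gO y)) /implyP; apply.
    move: Hxy; rewrite /S21_rel /= => /orP[] /edge_bump ->; rewrite ?orbT //.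
  rewrite ffunE.
  have -> : gO w0 = v0 by apply: val_inj.
  by have := Hf v0 => /forallP /(_ v1) /implyP; apply.
apply: (leq_trans HT).
have -> : #|T| = \sum_(h in B) #|[set u | e (h w0) u]|.
  rewrite -sum1_card.
  under [RHS]eq_bigr => h _ do rewrite -sum1_card.
  rewrite pair_big_dep /=; apply: eq_bigl => -[h u]; by rewrite !inE.
rewrite mulnC -sum_nat_const; apply: leq_sum => h _.
by apply: (@leq_bigmax _ (fun v => #|[set u | e v u]|)).
Qed.
End Step.

Section P3.
Variables (V : finType) (e : rel V) (v : V).

Definition psi (p : V * V) : {ffun 'I_(0 + 3) -> V} :=
  [ffun i : 'I_(0 + 3) => if val i == 1 then v else if val i == 0 then p.1 else p.2].

Lemma psi_inj : injective psi.
Proof.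
move=> [x y] [x' y'] /ffunP H.
have := H (@Ordinal 3 0 isT); have := H (@Ordinal 3 2 isT); rewrite !ffunE /=.
by move=> -> ->.
Qed.

Lemma P3_ge (se : symmetric e) : #|[set u | e v u]| * #|[set u | e v u]| <= homS21 0 e.
Proof.
rewrite -cardsX -(card_imset _ psi_inj); apply: subset_leq_card.
apply/subsetP => _ /imsetP[[x y] + ->]; rewrite !inE /= => /andP[Hx Hy].
apply/forallP => i; apply/forallP => j; apply/implyP.
rewrite /S21_rel /S21_edge !ffunE.
case: i => n Hn; case: j => k Hk /=.
by case: n Hn => [|[|[|n]]] Hn; case: k Hk => [|[|[|k]]] Hk; rewrite /= => // _; rewrite se.
Qed.
End P3.

Lemma maxdeg_sq (V : finType) (e : rel V) :
  symmetric e -> maxdeg e * maxdeg e <= homS21 0 e.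
Proof.
move=> se; case: (posnP #|V|) => HV.
  suff -> : maxdeg e = 0 by [].
  apply/eqP; rewrite -leqn0; apply/bigmax_leqP => i _.
  by have := card0_eq HV i; rewrite !inE.
rewrite /maxdeg; have [v ->] := eq_bigmax (fun v => #|[set u | e v u]|) HV.
exact: P3_ge.
Qed.

Theorem theorem3p3 (m : nat) (V : finType) (e : rel V) :
  2 <= m -> simple_graph e ->
  homS21 (m - 1) e ^ 2 <= homS21 0 e * homS21 (m - 2) e ^ 2.
Proof.
move=> Hm [se _].
have -> : m - 1 = (m - 2).+1 by lia.
have H1 := stepS e (m - 2).
have H2 := maxdeg_sq se.
rewrite !expnS !expn0 !muln1.
apply: (leq_trans (leq_mul H1 H1)).
by rewrite mulnACA leq_mul2r H2 orbT.
Qed.
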